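(* Let $\mathcal{B}\subseteq\mathcal{P}(X)$ be an admissible algebra containing $\mathcal{A}_0$. Let $\{\nu_k\}_{k\in\omega}$ be a sequence of (finitely additive) probability measures on $\mathcal{P}(X)$ such that (i) each $\nu_k$ is supported by a finite subset of $X$, and (ii) $\lim_k\nu_k(B)=\mu(B)$ for every $B\in\mathcal{B}$. Let $B_0\in\mathcal{B}$ be such that $\mu(B_0)>0$. Then there is $A\subseteq B_0$ such that the algebra generated by $\mathcal{B}\cup\{A\}$ is admissible and $\{\nu_k(A)\}_{k\in\omega}$ does not converge to $\mu(A)$.
   Context: $\omega=\{0,1,2,\dots\}$, $2^\omega$ is the Cantor set, $\lambda$ is the usual product probability measure on $2^\omega$, and $\mathrm{Clop}(2^\omega)$ is the algebra of clopen subsets of $2^\omega$. Let $X=\omega\times 2^\omega$. For $B\subseteq X$ and $n\in\omega$, $B_{|n}=\{t\in 2^\omega:(n,t)\in B\}$. A set $B\subseteq X$ is admissible if $B_{|n}\in\mathrm{Clop}(2^\omega)$ for all $n\in\omega$ and $\lim_n\lambda(B_{|n})$ exists; in that case $\mu(B):=\lim_n\lambda(B_{|n})$. An algebra of subsets of $X$ is admissible if all its elements are admissible. $\mathcal{A}_0$ is the algebra of subsets of $X$ generated by all products $A\times C$ with $A\subseteq\omega$ finite or cofinite and $C\in\mathrm{Clop}(2^\omega)$. *)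

(* Defs.v *)
From HB Require Import structures.
From mathcomp Require Import all_boot all_order all_algebra.
From mathcomp Require Import all_classical all_reals all_analysis.
Set Implicit Arguments. Unset Strict Implicit. Unset Printing Implicit Defensive.
Import Order.TTheory GRing.Theory Num.Theory.
Import numFieldTopology.Exports numFieldNormedType.Exports.
Local Open Scope classical_set_scope.
Local Open Scope ring_scope.

Definition X : Type := (nat * cantor_space)%type.

Definition clop (C : set cantor_space) : Prop := open C /\ closed C.

Definition depends_on (n : nat) (C : set cantor_space) : Prop :=
  forall t s : cantor_space, (forall i, (i < n)%N -> t i = s i) -> (C t <-> C s).

Definition ext_seq (n : nat) (f : {ffun 'I_n -> bool}) : cantor_space :=
  fun i => match insub i with Some j => f j | None => false end.

(* lambda(C) computed from any n such that C depends on the first n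
   coordinates (every clopen set has one): the proportion of the 2^n
   cylinders [f] contained in C; this is the product measure of C. *)
Definition lam_at (R : realType) (n : nat) (C : set cantor_space) : R :=
  (\sum_(f : {ffun 'I_n -> bool}) (if `[< C (ext_seq f) >] then 1 else 0))
    / (2 ^+ n).

Definition lam (R : realType) (C : set cantor_space) : R :=
  lam_at R (xget 0%N [set n | depends_on n C]) C.

Definition slice (B : set X) (n : nat) : set cantor_space :=
  [set t | B (n, t)].

Definition admissible (R : realType) (B : set X) : Prop :=
  (forall n, clop (slice B n)) /\ cvgn (fun n => lam R (slice B n)).

Definition mu (R : realType) (B : set X) : R :=
  limn (fun n => lam R (slice B n)).

Definition is_algebra (F : set (set X)) : Prop :=
  [/\ F set0, (forall A, F A -> F (~` A)) &
      (forall A B, F A -> F B -> F (A `|` B))].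

Definition admissible_alg (R : realType) (F : set (set X)) : Prop :=
  forall B, F B -> admissible R B.

Definition gen_alg (G : set (set X)) : set (set X) :=
  [set A | forall F, is_algebra F -> G `<=` F -> F A].

Definition A0 : set (set X) :=
  gen_alg [set A `*` C | A in [set A : set nat | finite_set A \/ finite_set (~` A)]
                        & C in clop].

Definition fa_prob (R : realType) (nu : set X -> R) : Prop :=
  [/\ nu setT = 1, (forall A, 0 <= nu A) &
      (forall A B, A `&` B = set0 -> nu (A `|` B) = nu A + nu B)].

Definition finitely_supported (R : realType) (nu : set X -> R) : Prop :=
  exists F : set X, finite_set F /\ nu (~` F) = 0.

(* Main.v *)
Require Import Defs.
From HB Require Import structures.
From mathcomp Require Import all_boot all_order all_algebra.
From mathcomp Require Import all_classical all_reals all_analysis.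
From mathcomp Require Import ring lra.
Import Order.TTheory GRing.Theory Num.Theory.
Import numFieldTopology.Exports numFieldNormedType.Exports.
Local Open Scope classical_set_scope.
Local Open Scope ring_scope.
Set Implicit Arguments. Unset Strict Implicit.
Definition cyl (t : cantor_space) (d : nat) : set cantor_space :=
  [set s | forall i, (i < d)%N -> s i = t i].

Lemma nbhs_coord (t : cantor_space) i : nbhs t [set s : cantor_space | s i = t i].
Proof.
have := @cvg_sup _ _ (fun i => Topological.class (initial_topology (@^~ i))) (nbhs t) t _.
case=> /(_ (@cvg_id _ _)) /(_ i) H _.
have := (@cvg_image _ _ (@^~ i) (nbhs t) t _).
case.
  by rewrite eqEsubset; split => // b _; exists (fun=> b).
move=> /(_ H) {}H _.
have : nbhs (t i) [set t i] by apply/principal_filterP.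
move=> /H [A nA eA].
apply: filterS nA => x Ax.
have : [set t i] (x i) by rewrite -eA; exists x.
by [].
Qed.

Lemma nbhs_cyl t d : nbhs t (cyl t d).
Proof.
elim: d => [|d IH].
  by apply: filterS (nbhs_coord t 0) => s _ i.
apply: (filterS _ (filterI IH (nbhs_coord t d))) => s [h1 h2] i; rewrite ltnS leq_eqVlt => /orP[/eqP->//|]; exact: h1.
Qed.
Lemma cantor_seq_cvg (s : nat -> cantor_space) (t : cantor_space) :
  (forall i, exists N, forall d, (N <= d)%N -> s d i = t i) ->
  s @ \oo --> t.
Proof.
move=> H.
apply/(@cvg_sup _ _ (fun i => Topological.class (initial_topology (@^~ i)))) => i.
apply/cvg_image.
  by rewrite eqEsubset; split => // b _; exists (fun=> b).
move=> U /= /principal_filterP Ut.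
exists [set x : cantor_space | U (x i)].
  have [N HN] := H i.
  exists N => // d /= Nd; rewrite HN //.
rewrite eqEsubset; split => b.
  by move=> [x Ux <-].
by move=> Ub; exists (fun=> b).
Qed.

Lemma open_cyl (C : set cantor_space) t : open C -> C t -> exists d, cyl t d `<=` C.
Proof.
move=> oC Ct; apply: contrapT => /forallNP H.
have H' : forall d, exists s, cyl t d s /\ ~ C s.
  move=> d; have := H d => /existsNP [s /not_implyP [h1 h2]]; by exists s.
have [s Hs] := choice H'.
have cv : s @ \oo --> t.
  apply: cantor_seq_cvg => i; exists i.+1 => d id.
  by have [+ _] := Hs d; apply; apply: leq_trans id.
have : nbhs t C by apply: open_nbhs_nbhs.
move=> /cv [N _ HN].
by have [_] := Hs N; apply; apply: HN => /=.
Qed.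
Lemma dep_open n (C : set cantor_space) : depends_on n C -> open C.
Proof.
move=> H; rewrite openE => t Ct.
apply: filterS (nbhs_cyl t n) => s hs.
by apply/(H t s) => // i /hs ->.
Qed.

Lemma depC n (C : set cantor_space) : depends_on n C -> depends_on n (~` C).
Proof. by move=> H t s h; have := H t s h; rewrite /setC /=; tauto. Qed.

Lemma dep_clop n (C : set cantor_space) : depends_on n C -> clop C.
Proof.
move=> H; split; first exact: dep_open H.
have := dep_open (depC H); by rewrite -closedC setCK.
Qed.

Lemma clop_dep (C : set cantor_space) : clop C -> exists n, depends_on n C.
Proof.
move=> [oC cC].
have loc : forall p, exists d, cyl p d `<=` C \/ cyl p d `<=` ~` C.
  move=> p; have [Cp|nCp] := pselect (C p).
    by have [d hd] := open_cyl oC Cp; exists d; left.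
  have oC' : open (~` C) by rewrite openC.
  by have [d hd] := open_cyl oC' nCp; exists d; right.
apply: contrapT => /forallNP H.
have H' : forall n, exists ts : cantor_space * cantor_space,
    (forall i, (i < n)%N -> ts.1 i = ts.2 i) /\ ~ (C ts.1 <-> C ts.2).
  move=> n; have := H n => /existsNP [t /existsNP [s /not_implyP [h1 h2]]].
  by exists (t, s).
have [u Hu] := choice H'.
have := @cantor_space_compact ((fun n => (u n).1) @ \oo) _ (filterT).
move=> [p [_ clp]].
have [d hd] := loc p.
have := clp [set x | exists2 m, (d <= m)%N & x = (u m).1] (cyl p d).
case.
- by exists d => // m /= dm; exists m.
- exact: nbhs_cyl.
move=> x [[m dm ->] cx].
have [agr nq] := Hu m.
have cy : cyl p d (u m).2.
  by move=> i id; rewrite -agr ?(leq_trans id) //; apply: cx.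
apply: nq; case: hd => h.
  by split => _; [exact: h cy|exact: h cx].
by split => Hc; exfalso; [exact: h _ cx Hc|exact: h _ cy Hc].
Qed.
Lemma ext_seq_lt n (f : {ffun 'I_n -> bool}) i (h : (i < n)%N) :
  ext_seq f i = f (Ordinal h).
Proof. by rewrite /ext_seq insubT. Qed.

Definition hext n (p : {ffun 'I_n -> bool} * bool) : {ffun 'I_n.+1 -> bool} :=
  [ffun i => if unlift ord_max i is Some j then p.1 j else p.2].
Definition hres n (g : {ffun 'I_n.+1 -> bool}) : {ffun 'I_n -> bool} * bool :=
  ([ffun j => g (lift ord_max j)], g ord_max).

Lemma hext_bij n : bijective (@hext n).
Proof.
exists (@hres n).
  move=> [f b]; rewrite /hres /hext; congr pair.
    by apply/ffunP => j; rewrite !ffunE liftK.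
  by rewrite ffunE unlift_none.
move=> g; apply/ffunP => i; rewrite /hext /hres ffunE.
by case: unliftP => [j ->|->] /=; rewrite ?ffunE.
Qed.

Lemma lam_at_S (R : realType) n (C : set cantor_space) :
  depends_on n C -> lam_at R n.+1 C = lam_at R n C.
Proof.
move=> H; rewrite /lam_at.
rewrite (reindex (@hext n)) /=; last by apply: onW_bij; exact: hext_bij.
rewrite -(pair_big xpredT xpredT (fun f b => (if `[< C (ext_seq (hext (f, b))) >] then 1 else 0) : R)) /=.
have E : forall (f : {ffun 'I_n -> bool}) b, `[< C (ext_seq (hext (f, b))) >] = `[< C (ext_seq f) >].
  move=> f b; apply: asbool_equiv_eq; apply: H => i hi.
  have hi' : (i < n.+1)%N by apply: leq_trans hi _.
  rewrite (ext_seq_lt _ hi) (ext_seq_lt _ hi') /hext ffunE.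
  have -> : Ordinal hi' = lift ord_max (Ordinal hi) by apply: val_inj; rewrite /= /bump leqNgt hi.
  by rewrite liftK.
rewrite (eq_bigr (fun f => 2 * (if `[< C (ext_seq f) >] then 1 else 0) : R)); last first.
  by move=> f _; rewrite big_bool /= !E mulr_natl mulr2n.
rewrite -mulr_sumr exprS.
have h2 : (2 : R) ^+ n != 0 by rewrite expf_neq0.
by field; rewrite h2.
Qed.

Lemma dep_le n m (C : set cantor_space) : depends_on n C -> (n <= m)%N -> depends_on m C.
Proof. by move=> H nm t s h; apply: H => i i_n; apply: h; apply: leq_trans nm. Qed.

Lemma lam_at_le (R : realType) n m (C : set cantor_space) :
  depends_on n C -> (n <= m)%N -> lam_at R m C = lam_at R n C.
Proof.
move=> H; elim: m => [|m IH]; first by rewrite leqn0 => /eqP->.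
rewrite leq_eqVlt => /orP[/eqP<-//|]; rewrite ltnS => nm.
by rewrite lam_at_S ?IH //; apply: dep_le H nm.
Qed.

Lemma lamE (R : realType) n (C : set cantor_space) :
  depends_on n C -> lam R C = lam_at R n C.
Proof.
move=> H; rewrite /lam.
have Hm : [set n | depends_on n C] (xget 0%N [set n | depends_on n C]) by apply: xgetPex; exists n.
set m := xget _ _ in Hm *.
by rewrite -(lam_at_le R H (leq_maxl n m)) (lam_at_le R Hm (leq_maxr n m)).
Qed.

Lemma lam_at_ge0 (R : realType) n (C : set cantor_space) : 0 <= lam_at R n C.
Proof.
rewrite /lam_at divr_ge0 ?exprn_ge0 // sumr_ge0 // => f _; by case: ifP.
Qed.

Lemma lam_at_sub (R : realType) n (P Q Z : set cantor_space) :
  (forall t, P t -> Q t \/ Z t) -> lam_at R n P <= lam_at R n Q + lam_at R n Z.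
Proof.
move=> H; rewrite /lam_at -mulrDl ler_wpM2r ?invr_ge0 ?exprn_ge0 //.
rewrite -big_split /= ler_sum // => f _.
case: (asboolP (P (ext_seq f))) => [/H [hq|hz]|_].
- by rewrite (asboolT hq) lerDl; case: ifP.
- by rewrite (asboolT hz) lerDr; case: ifP.
- by rewrite addr_ge0 //; case: ifP.
Qed.

Lemma lam_diff (R : realType) (P Q Z : set cantor_space) :
  clop P -> clop Q -> clop Z -> (forall t, (P t /\ ~ Q t) \/ (Q t /\ ~ P t) -> Z t) ->
  `|lam R P - lam R Q| <= lam R Z.
Proof.
move=> /clop_dep [n1 h1] /clop_dep [n2 h2] /clop_dep [n3 h3] H.
set N := maxn n1 (maxn n2 n3).
have d1 := dep_le h1 (leq_maxl n1 (maxn n2 n3)).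
have d2 := dep_le h2 (leq_trans (leq_maxl n2 n3) (leq_maxr n1 (maxn n2 n3))).
have d3 := dep_le h3 (leq_trans (leq_maxr n2 n3) (leq_maxr n1 (maxn n2 n3))).
rewrite (lamE R d1) (lamE R d2) (lamE R d3).
have a : lam_at R N Q <= lam_at R N P + lam_at R N Z.
  apply: lam_at_sub => t Qt.
  by have [Pt|nPt] := pselect (P t); [left|right; apply: H; right].
have b : lam_at R N P <= lam_at R N Q + lam_at R N Z.
  apply: lam_at_sub => t Pt.
  by have [Qt|nQt] := pselect (Q t); [left|right; apply: H; left].
rewrite ler_norml; apply/andP; split; lra.
Qed.

Lemma lam_at_mono (R : realType) n (P Q : set cantor_space) :
  P `<=` Q -> lam_at R n P <= lam_at R n Q.
Proof.
move=> H; rewrite /lam_at ler_wpM2r ?invr_ge0 ?exprn_ge0 // ler_sum // => f _.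
case: (asboolP (P (ext_seq f))) => [/H hq|_]; first by rewrite (asboolT hq).
by case: ifP.
Qed.

Lemma lam_mono (R : realType) (P Q : set cantor_space) :
  clop P -> clop Q -> P `<=` Q -> lam R P <= lam R Q.
Proof.
move=> /clop_dep [n1 h1] /clop_dep [n2 h2] H.
have d1 := dep_le h1 (leq_maxl n1 n2).
have d2 := dep_le h2 (leq_maxr n1 n2).
by rewrite (lamE R d1) (lamE R d2) lam_at_mono.
Qed.

Lemma sum_one_seq (R : realType) (T : Type) (L : seq T) : \sum_(q <- L) (1 : R) = (size L)%:R.
Proof. by elim: L => [|q L IH]; rewrite ?big_nil ?big_cons //= IH -addn1 natrD addrC. Qed.

Definition Uset (D : nat) (L : seq X) : set cantor_space :=
  [set t | exists2 q, q \in L & forall i, (i < D)%N -> t i = q.2 i].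

Lemma Uset_dep D L : depends_on D (Uset D L).
Proof.
move=> t s h; split => -[q qL hq]; exists q => // i iD.
  by rewrite -hq // h.
by rewrite -hq // h.
Qed.

Lemma lam_at_U (R : realType) D (L : seq X) :
  lam_at R D (Uset D L) <= (size L)%:R / 2 ^+ D.
Proof.
rewrite /lam_at ler_wpM2r ?invr_ge0 ?exprn_ge0 //.
pose restr (q : X) : {ffun 'I_D -> bool} := [ffun i : 'I_D => q.2 (val i)].
apply: (@le_trans _ _ (\sum_(f : {ffun 'I_D -> bool}) \sum_(q <- L) (if f == restr q then 1 else 0 : R))).
  apply: ler_sum => f _.
  case: (asboolP (Uset D L (ext_seq f))) => [[q qL hq]|_]; last first.
    by rewrite sumr_ge0 // => q _; case: ifP.
  have -> : f = restr q.
    apply/ffunP => i; rewrite ffunE -hq ?ltn_ord //.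
    by rewrite (ext_seq_lt _ (ltn_ord i)); congr (f _); apply: val_inj.
  rewrite (big_rem q qL) /= eqxx lerDl sumr_ge0 // => q' _; by case: ifP.
rewrite exchange_big /=.
under eq_bigr do rewrite -big_mkcond big_pred1_eq.
by rewrite sum_one_seq.
Qed.

Lemma nat_bound a n : (a * n.+1 <= 2 ^ (a + n))%N.
Proof.
rewrite expnD; apply: leq_mul.
  exact: ltnW (ltn_expl a (ltnSn 1)).
exact: ltn_expl n (ltnSn 1).
Qed.

Lemma real_bound (R : realType) a n : (a%:R : R) / 2 ^+ (a + n) <= n.+1%:R^-1.
Proof.
rewrite ler_pdivrMr ?exprn_gt0 // mulrC ler_pdivlMr ?ltr0n //.
by rewrite -natrM -natrX ler_nat nat_bound.
Qed.

Lemma lam_ge0 (R : realType) (C : set cantor_space) : 0 <= lam R C.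
Proof. exact: lam_at_ge0. Qed.

Section nu_props.
Variables (R : realType) (nu : set X -> R).
Hypothesis Hnu : fa_prob nu.

Lemma nu_mono (P Q : set X) : P `<=` Q -> nu P <= nu Q.
Proof.
case: Hnu => _ h0 hadd PQ.
by rewrite -(setDUK PQ) hadd ?setDIK // lerDl.
Qed.

Lemma nu_subadd (P Q : set X) : nu (P `|` Q) <= nu P + nu Q.
Proof.
case: Hnu => _ h0 hadd.
have -> : P `|` Q = P `|` (Q `\` P).
  apply/seteqP; split => x /=; first by case=> h; [left|have [?|?] := pselect (P x); [left|right]].
  by case=> [?|[]]; [left|right].
by rewrite hadd ?setDIK // lerD2l nu_mono // => x [].
Qed.
End nu_props.

Unset Implicit Arguments.
Unset Strict Implicit.

Theorem lemma2p6 (R : realType) (B : set (set X)) (nu : nat -> set X -> R)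
    (B0 : set X) :
  is_algebra B -> admissible_alg R B -> A0 `<=` B ->
  (forall k, fa_prob (nu k)) ->
  (forall k, finitely_supported (nu k)) ->
  (forall b, B b -> (fun k => nu k b) @ \oo --> mu R b) ->
  B B0 -> 0 < mu R B0 ->
  exists A : set X, A `<=` B0 /\
    admissible_alg R (gen_alg (B `|` [set A])) /\
    ~ ((fun k => nu k A) @ \oo --> mu R A).
Proof.
move=> [B_0 B_C B_U] Hadm HA0 Hnu Hfin Hcv HB0 Hpos.

have B_I : forall P Q, B P -> B Q -> B (P `&` Q).
  move=> P Q hP hQ; rewrite -[P `&` Q]setCK setCI; apply: (B_C); apply: (B_U); exact: (B_C).
pose W j : set X := [set n : nat | (j <= n)%N] `*` [set: cantor_space].
have BW : forall j, B (W j).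
  move=> j; apply: HA0 => F Falg Fsub; apply: Fsub.
  exists [set n : nat | (j <= n)%N].
    right; have -> : ~` [set n : nat | (j <= n)%N] = `I_j.
      by apply/seteqP; split => n /=; rewrite ltnNge => h; apply/negP.
    exact: finite_II.
  exists [set: cantor_space] => //; split; [exact: openT | exact: closedT].
have cvW : forall j, (fun k => nu k (B0 `&` W j)) @ \oo --> mu R B0.
  move=> j.
  have -> : mu R B0 = mu R (B0 `&` W j).
    rewrite /mu; apply/esym/(cvg_lim (@Rhausdorff R)).
    apply: cvg_trans (near_eq_cvg _) (Hadm _ HB0).2.
    exists j => // n /= jn; congr (lam R _).

    by apply/seteqP; split => t; rewrite /slice /=; [move=> ?; split => //; split | move=> []].
  exact: Hcv _ (B_I _ _ HB0 (BW j)).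
have hc : mu R B0 / 2 < mu R B0 by lra.
have Hk : forall j, exists k, (j <= k)%N /\ mu R B0 / 2 < nu k (B0 `&` W j).
  move=> j; have [N _ HN] := cvgr_gt (mu R B0) (cvW j) _ hc.
  exists (maxn j N); split; first exact: leq_maxl.
  by apply: HN => /=; exact: leq_maxr.
have [kk Hkk] := choice Hk.
have Hs : forall k, exists s : seq X, nu k (~` [set` s]) = 0.
  by move=> k; have [F [/finite_seqP [s ->] h]] := Hfin k; exists s.
have [sq Hsq] := choice Hs.
pose L n := flatten [seq sq (kk i) | i <- iota 0 n.+1].
pose D n := (size (L n) + n)%N.
pose A : set X := [set p | B0 p /\ Uset (D p.1) (L p.1) p.2].
have sliceA : forall n, slice A n = slice B0 n `&` Uset (D n) (L n) by [].
have clopB0 : forall n, clop (slice B0 n) by exact: (Hadm _ HB0).1.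
have clopA : forall n, clop (slice A n).
  move=> n; rewrite sliceA; case: (clopB0 n) => o1 c1.
  case: (dep_clop (@Uset_dep (D n) (L n))) => o2 c2.
  split; [exact: openI | exact: closedI].
have lamA : forall n, lam R (slice A n) <= n.+1%:R^-1.
  move=> n; apply: le_trans (lam_mono R (clopA n) (dep_clop (@Uset_dep (D n) (L n))) _) _.
    by rewrite sliceA => t [].
  rewrite (lamE R (@Uset_dep _ _)).
  exact: le_trans (lam_at_U _ _ _) (real_bound _ _ _).
have lamA0 : (fun n => lam R (slice A n)) @ \oo --> (0:R).
  apply: (@squeeze_cvgr _ _ _ _ (fun=> 0) (fun n => n.+1%:R^-1)).
  - by apply: nearW => n; rewrite lamA lam_ge0.
  - exact: cvg_cst.
  - exact: cvg_harmonic.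
have muA : mu R A = 0 by apply: (cvg_lim (@Rhausdorff R)).
exists A; split; first by move=> p [].
split.
  pose G : set (set X) := [set S | (forall n, clop (slice S n)) /\
    exists2 b, B b & forall p, (S p /\ ~ b p) \/ (b p /\ ~ S p) -> A p].
  have Galg : is_algebra G.
    split.
    - split; first by move=> n; split; [exact: open0 | exact: closed0].
      by exists set0 => // p [[]|[]].
    - move=> S [cS [b Bb Hb]]; split.
        move=> n; case: (cS n) => Ho Hc; split.
          by rewrite openC.
        by rewrite closedC.
      exists (~` b); first exact: B_C.
      move=> p h; apply: Hb; rewrite /setC /= in h.
      by case: (pselect (S p)) => ?; case: (pselect (b p)) => ?; tauto.
    - move=> S1 S2 [c1 [b1 B1 H1]] [c2 [b2 B2 H2]]; split.
        move=> n; case: (c1 n) => o1 k1; case: (c2 n) => o2 k2.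
        split; [exact: openU | exact: closedU].
      exists (b1 `|` b2); first exact: B_U.
      move=> p [[h nb]|[h nS]].
        case: h => h; [apply: H1|apply: H2]; left; split => // hb; apply: nb; [left|right]; exact: hb.

      case: h => h; [apply: H1|apply: H2]; right; split => // hb; apply: nS; [left|right]; exact: hb.
  have sub : B `|` [set A] `<=` G.
    move=> S [Bs|->].
      split; first exact: (Hadm _ Bs).1.
      by exists S => // p [[]|[]].
    split; first exact: clopA.
    by exists set0 => // p [[]|[]].
  move=> S /(_ G Galg sub) [cS [b Bb Hb]].
  split => //.
  have cvb := (Hadm _ Bb).2.
  have dlt : forall n, `|lam R (slice S n) - lam R (slice b n)| <= lam R (slice A n).
    move=> n; apply: lam_diff => //; first exact: (Hadm _ Bb).1 n.
    by move=> t h; apply: (Hb (n, t)).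
  have d0 : (fun n => lam R (slice S n) - lam R (slice b n)) @ \oo --> (0:R).
    apply: (@squeeze_cvgr _ _ _ _ (fun n => - lam R (slice A n)) (fun n => lam R (slice A n))).
    - by apply: nearW => n; have := dlt n; rewrite ler_norml.
    - rewrite -oppr0; exact: cvgN lamA0.
    - exact: lamA0.
  apply: (cvgP (limn (fun n => lam R (slice b n)) + 0)).
  have -> : (fun n => lam R (slice S n)) =
      (fun n => lam R (slice b n)) + (fun n => lam R (slice S n) - lam R (slice b n)).
    by apply/funext => n /=; rewrite addrC subrK.
  exact: cvgD cvb d0.
rewrite muA => hcv.
have h0 : (0:R) < mu R B0 / 2 by lra.
have [N _ HN] := cvgr_lt 0 hcv _ h0.
have [kN hgt] := Hkk N.
have hlt := HN (kk N) kN.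
have hsub : B0 `&` W N `<=` A `|` ~` [set` sq (kk N)].
  move=> p [B0p [Np _]]; have [ps|pns] := pselect ([set` sq (kk N)] p); last by right.
  left; split => //; exists p => //.
  apply/flattenP; exists (sq (kk N)) => //.
  by apply/mapP; exists N => //; rewrite mem_iota /= add0n ltnS.
have := nu_mono (Hnu (kk N)) hsub.
have := nu_subadd (Hnu (kk N)) A (~` [set` sq (kk N)]).
rewrite Hsq addr0 => h1 h2.
lra.
Qed.
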